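(* For every $n\ge 3$, the sun $S_n$ is distance antimagic.
   Context: The sun $S_n$ ($n\ge3$) is the graph on $2n$ vertices obtained from a cycle $x_1x_2\cdots x_n x_1$ by attaching a new pendant vertex $y_i$ adjacent only to $x_i$, for each $i=1,\dots,n$. For a graph $G=(V,E)$ with $v=|V|$ and a bijection $f:V\to\{1,\dots,v\}$, the vertex-weight of $x$ is $w(x)=\sum_{y\in N(x)}f(y)$ with $N(x)$ the set of neighbours of $x$. $G$ is distance antimagic if it admits a bijection $f$ under which all vertex-weights are pairwise distinct. *)

(* Defs.v *)
From mathcomp Require Import all_boot.
Set Implicit Arguments. Unset Strict Implicit. Unset Printing Implicit Defensive.

Definition vweight (V : finType) (adj : rel V) (f : V -> nat) (x : V) : nat :=
  \sum_(y : V | adj x y) f y.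

(* A bijection onto {1..|V|} is
   encoded as a bijection g : V -> 'I_#|V| with f x = g x + 1. *)
Definition distance_antimagic (V : finType) (adj : rel V) : Prop :=
  exists g : V -> 'I_#|V|, bijective g /\
    injective (vweight adj (fun v => (nat_of_ord (g v)).+1)).

(* The sun S_n: vertices inl i = x_i (cycle vertices) and inr i = y_i (pendants),
   i ranging over 'I_n (x_0 ... x_{n-1}, indices mod n). *)
Definition sun_adj (n : nat) : rel ('I_n + 'I_n) :=
  fun u v =>
    match u, v with
    | inl i, inl j => ((i.+1 %% n) == j) || ((j.+1 %% n) == i)
    | inl i, inr j => i == j
    | inr i, inl j => i == j
    | inr _, inr _ => false
    end.
Arguments sun_adj n : clear implicits.

(* Main.v *)
Require Import Defs.
From mathcomp Require Import all_boot.
From mathcomp Require Import zify.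

Section S.
Variable n : nat.
Hypothesis hn : 3 <= n.
Local Notation V := ('I_n + 'I_n)%type.

Lemma valS (i : 'I_n) : nat_of_ord (ordS i) = if i.+1 == n then 0 else i.+1.
Proof.
rewrite /ordS /=; case: eqP => [->|h]; first by rewrite modnn.
by rewrite modn_small //; have := ltn_ord i; lia.
Qed.

Lemma valP (i : 'I_n) : nat_of_ord (ord_pred i) = if nat_of_ord i == 0 then n.-1 else (nat_of_ord i).-1.
Proof.
rewrite /ord_pred /=; case: eqP => [->|h].
  by rewrite add0n modn_small //; lia.
have -> : (i + n).-1 = (i.-1) + n by lia.
by rewrite modnDr modn_small //; have := ltn_ord i; lia.
Qed.

Lemma valS' (i : 'I_n) : (nat_of_ord i).+1 %% n = if i.+1 == n then 0 else i.+1.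
Proof. exact: valS. Qed.
Lemma valP' (i : 'I_n) : (nat_of_ord i + n).-1 %% n = if nat_of_ord i == 0 then n.-1 else (nat_of_ord i).-1.
Proof. exact: valP. Qed.

Lemma SneP (i : 'I_n) : ordS i != ord_pred i.
Proof.
apply/eqP => /(congr1 (@nat_of_ord n)); rewrite valS valP.
have := ltn_ord i; case: eqP; case: eqP; move=> *; lia.
Qed.

Lemma wx (f : V -> nat) (i : 'I_n) :
  vweight (sun_adj n) f (inl i) = f (inl (ordS i)) + f (inl (ord_pred i)) + f (inr i).
Proof.
rewrite /vweight big_sumType /=.
rewrite [X in _ + X](big_pred1 i); last by move=> j /=; rewrite eq_sym.
congr (_ + _).
rewrite (bigD1 (ordS i)) /=; last by rewrite eqxx.
rewrite (bigD1 (ord_pred i)) /=; last first.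
  rewrite (eq_sym (ord_pred i)) SneP andbT.
  by apply/orP; right; have := ord_predK i => /(congr1 val) /= ->.
rewrite big1 ?addn0 //.
move=> j /andP [/andP [h1 h3] h2].
exfalso; case/orP: h1 => /eqP h.
  by move/eqP: h3; apply; apply: val_inj.
have hj : ordS j = i by apply: val_inj.
by move/eqP: h2; apply; rewrite -hj ordSK.
Qed.

Lemma wy (f : V -> nat) (i : 'I_n) :
  vweight (sun_adj n) f (inr i) = f (inl i).
Proof.
rewrite /vweight big_sumType /=.
rewrite (big_pred1 i) //.
by rewrite big_pred0 ?addn0.
Qed.

Definition gnat (v : V) : nat :=
  match v with inl i => val i | inr i => (n + n).-1 - val i end.

Lemma cardV : #|{: V}| = n + n.
Proof. by rewrite card_sum card_ord. Qed.

Lemma gnat_lt v : gnat v < #|{: V}|.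
Proof. rewrite cardV; case: v => i /=; have := ltn_ord i; lia. Qed.

Definition g (v : V) : 'I_#|{: V}| := Ordinal (gnat_lt v).

Definition A (i : nat) := (if i.+1 == n then 0 else i.+1).+1 + (if i == 0 then n.-1 else i.-1).+1 + ((n + n).-1 - i).+1.

Lemma Wl (i : 'I_n) : vweight (sun_adj n) (fun v => (nat_of_ord (g v)).+1) (inl i) = A i.
Proof. rewrite wx /A; congr (_.+1 + _.+1 + _); [exact: valS | exact: valP]. Qed.

Lemma Wr (i : 'I_n) : vweight (sun_adj n) (fun v => (nat_of_ord (g v)).+1) (inr i) = i.+1.
Proof. by rewrite wy. Qed.

End S.

Theorem mainTheorem8 (n : nat) (hn : 3 <= n) : distance_antimagic (sun_adj n).
Proof.
exists (@g n hn); split.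
  apply: inj_card_bij; last by rewrite card_ord.
  move=> [i|i] [j|j] /(congr1 val) /= h; have := ltn_ord i; have := ltn_ord j;
    move=> hj hi; try (congr (_ _); apply: ord_inj => /=); lia.
move=> [i|i] [j|j]; rewrite ?Wl ?Wr /A;
  have := ltn_ord i; have := ltn_ord j => hj hi;
  repeat case: eqP => ? ; move=> h; try (congr (_ _); apply: ord_inj => /=); lia.
Qed.
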